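(* Let $M \in \mathbb{C}^{n\times n}$ be positive semi-definite and let $Q$ be a stochastic block decomposition of size $\alpha$ in $\mathbb{C}^{n\times n}$. Let $\lambda(M) = (\lambda_1,\dots,\lambda_n)$ be the eigenvalues of $M$ in non-increasing order and $\beta(M) = (\beta_1,\dots,\beta_n)$ with $\beta_j = \alpha\,\mathbb{E}[\lambda_j(QMQ)]$. Then $\lambda(M) \prec \beta(M)$.
   Context: A stochastic block decomposition of size $\alpha$ in $\mathbb{C}^{n\times n}$ is a random variable $Q$ on a probability space taking values in the set of orthogonal projection matrices in $\mathbb{C}^{n\times n}$ such that the entrywise expectation satisfies $\mathbb{E}[Q] = \alpha^{-1}I$. $\lambda_j(X)$ denotes the $j$-th largest eigenvalue of a Hermitian matrix $X$. For $x,y\in\mathbb{R}^n$, $x \prec y$ ($x$ is majorized by $y$) means that after sorting both in non-increasing order, $\sum_{i=1}^k x_i \le \sum_{i=1}^k y_i$ for $1\le k\le n-1$ and $\sum_{i=1}^n x_i = \sum_{i=1}^n y_i$. *)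

(* Defs.v *)
From HB Require Import structures.
From mathcomp Require Import all_boot all_order all_algebra.
From mathcomp Require Import sesquilinear spectral.
From mathcomp Require Import complex.
From mathcomp Require Import all_classical all_reals.
From mathcomp Require Import measure lebesgue_measure lebesgue_integral probability.
Set Implicit Arguments. Unset Strict Implicit. Unset Printing Implicit Defensive.
Import Order.TTheory GRing.Theory Num.Theory.
Local Open Scope ring_scope.

Definition psdmx (R : rcfType) (n : nat) (M : 'M[R[i]]_n) : Prop :=
  M \is hermsymmx /\
  forall v : 'rV[R[i]]_n, 0 <= (v *m M *m (map_mx Num.conj v)^T) 0 0.

Definition orth_proj (R : rcfType) (n : nat) (P : 'M[R[i]]_n) : Prop :=
  P \is hermsymmx /\ P *m P = P.

(* Eigenvalues of a Hermitian matrix listed in non-increasing order: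
   spectral_diag X is the diagonal of the unitary diagonalisation of X
   (real for Hermitian X); we take real parts and sort. *)
Definition eigvals (R : rcfType) (n : nat) (X : 'M[R[i]]_n) : seq R :=
  sort (fun x y : R => y <= x)
       [seq complex.Re (spectral_diag X 0 j) | j <- enum 'I_n].

(* lambda_j(X), j = 0..n-1 (0-based), j-th largest eigenvalue. *)
Definition eigval (R : rcfType) (n : nat) (X : 'M[R[i]]_n) (j : 'I_n) : R :=
  nth 0 (eigvals X) j.

Definition majorized (R : realDomainType) (n : nat) (x y : 'I_n -> R) : Prop :=
  let xs := sort (fun a b : R => b <= a) [seq x i | i <- enum 'I_n] in
  let ys := sort (fun a b : R => b <= a) [seq y i | i <- enum 'I_n] in
  (forall k : nat, (1 <= k <= n.-1)%N ->
     \sum_(i < k) nth 0 xs i <= \sum_(i < k) nth 0 ys i) /\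
  \sum_(i < n) nth 0 xs i = \sum_(i < n) nth 0 ys i.

Definition cexpect (d : measure_display) (T : measurableType d) (R : realType)
    (P : probability T R) (f : T -> R[i]) : R[i] :=
  Complex (\int[P]_w complex.Re (f w)) (\int[P]_w complex.Im (f w)).

Definition stoch_block_decomp (d : measure_display) (T : measurableType d)
    (R : realType) (P : probability T R) (n : nat) (alpha : R)
    (Q : T -> 'M[R[i]]_n) : Prop :=
  [/\ forall i j : 'I_n,
        measurable_fun setT (fun w => complex.Re (Q w i j)) /\
        measurable_fun setT (fun w => complex.Im (Q w i j)),
      forall w, orth_proj (Q w) &
      \matrix_(i, j) cexpect P (fun w => Q w i j)
        = (Complex alpha^-1 0 : R[i])%:M ].

(* Main.v *)
Require Import Defs.
From HB Require Import structures.
From mathcomp Require Import all_boot all_order all_algebra.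
From mathcomp Require Import sesquilinear spectral complex.
From mathcomp Require Import all_classical all_reals.
From mathcomp Require Import measure lebesgue_measure lebesgue_integral probability.
From mathcomp Require Import all_analysis.
From mathcomp Require Import measurable_realfun.
From mathcomp Require Import ring lra.
Import Order.TTheory GRing.Theory Num.Theory.
Local Open Scope ring_scope.
Set Implicit Arguments. Unset Strict Implicit. Unset Printing Implicit Defensive.

Section Comb.
Variable R : realDomainType.

Lemma kyfan_seq (s u : nat -> R) n k :
  (k <= n)%N -> (forall i j, (i <= j)%N -> (j < n)%N -> s j <= s i) ->
  (forall i, (i < n)%N -> 0 <= u i <= 1) ->
  (\sum_(i < n) u i = k%:R \/
     (\sum_(i < n) u i <= k%:R /\ forall i, (i < n)%N -> 0 <= s i)) ->
  \sum_(i < n) u i * s i <= \sum_(i < k) s i.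
Proof.
move=> kn sdec ub hsum.
case: k kn hsum => [|k] kn hsum.
  have su0 : \sum_(i < n) u i <= 0 by case: hsum => [->|[]] //.
  have u0 : forall i : 'I_n, u i = 0.
    move=> i; apply/eqP; rewrite eq_le; case/andP: (ub i (ltn_ord i)) => -> _; rewrite andbT.
    apply: le_trans su0; rewrite (bigD1 i) //= lerDl sumr_ge0 // => j _.
    by case/andP: (ub j (ltn_ord j)).
  by rewrite big_ord0 big1 // => i _; rewrite u0 mul0r.
set t := s k.
have step : forall i : 'I_n,
    u i * s i <= u i * t + (if (i < k.+1)%N then s i - t else 0).
  move=> i; case/andP: (ub i (ltn_ord i)) => u0 u1.
  case: ifP => hi.
    have hst : t <= s i by apply: sdec => //; rewrite -ltnS.
    have h1 : 0 <= 1 - u i by rewrite subr_ge0.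
    have h2 : 0 <= s i - t by rewrite subr_ge0.
    have := mulr_ge0 h1 h2.
    rewrite mulrBl mul1r mulrBr => h. lra.
  have hst : s i <= t by apply: sdec => //; move/negbT: hi; rewrite -leqNgt => /ltnW.
  by rewrite addr0 ler_wpM2l.
apply: (le_trans (ler_sum _ (fun i _ => step i))).
rewrite big_split /=.
rewrite (eq_bigr (fun i : 'I_n => t * u i)); last by move=> i _; rewrite mulrC.
rewrite -mulr_sumr.
rewrite -(big_mkcond (fun i : 'I_n => (i < k.+1)%N)) /=.
rewrite -(big_ord_widen n (fun i => s i - t) kn) sumrB sumr_const card_ord.
suff : t * (\sum_(i < n) u i) <= t *+ k.+1 by lra.
case: hsum => [->|[hs hpos]]; first by rewrite mulr_natr.
rewrite -mulr_natr ler_wpM2l //; apply: hpos; exact: kn.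
Qed.

End Comb.
Section Comb2.
Variable R : realDomainType.
Local Notation ge := (fun x y : R => y <= x).

Lemma kyfan_vec n (d w : 'I_n -> R) k :
  (k <= n)%N -> (forall j, 0 <= w j <= 1) ->
  (\sum_j w j = k%:R \/ (\sum_j w j <= k%:R /\ forall j, 0 <= d j)) ->
  \sum_j w j * d j <= \sum_(i < k) nth 0 (sort ge [seq d j | j <- enum 'I_n]) i.
Proof.
move=> kn wb hs.
pose ps := [seq (d j, w j) | j <- enum 'I_n].
pose sps := sort (relpre (@fst R R) ge) ps.
have size_sps : size sps = n by rewrite size_sort size_map size_enum_ord.
have Esort : sort ge [seq d j | j <- enum 'I_n] = map fst sps.
  by rewrite /sps -sort_map /ps -map_comp.
have pe : perm_eq sps ps by rewrite perm_sort.
have mem_sps p : p \in sps -> exists j, p = (d j, w j).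
  by rewrite (perm_mem pe) => /mapP[j _ ->]; exists j.
pose s := fun i => (nth (0,0) sps i).1.
pose u := fun i => (nth (0,0) sps i).2.
have bigE (F : R * R -> R) : \sum_j F (d j, w j) = \sum_(i < n) F (nth (0,0) sps i).
  transitivity (\sum_(p <- ps) F p); first by rewrite big_map big_enum.
  by rewrite -(perm_big _ pe) (big_nth (0,0)) size_sps big_mkord.
have nth_sps i : (i < n)%N -> exists j, nth (0,0) sps i = (d j, w j).
  by move=> hi; apply: mem_sps; rewrite mem_nth // size_sps.
rewrite (bigE (fun p => p.2 * p.1)) Esort.
rewrite (eq_bigr (fun i : 'I_k => s i)); last first.
  by move=> i _; rewrite (nth_map (0,0)) // size_sps (leq_trans (ltn_ord i) kn).
apply: (@kyfan_seq R s u n k kn).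
- move=> i j ij jn.
  have srt : sorted (relpre (@fst R R) ge) sps.
    by apply: sort_sorted => x y /=; exact: le_total.
  have tr : transitive (relpre (@fst R R) ge).
    rewrite /transitive /relpre /= => x1 x2 x3 h2 h3; exact: le_trans h3 h2.
  have rf : reflexive (relpre (@fst R R) ge) by rewrite /reflexive /relpre /= => x.
  have := sorted_leq_nth tr rf (0,0) srt; apply => //; rewrite inE size_sps //.
  exact: leq_ltn_trans ij jn.
- by move=> i /nth_sps[j E]; rewrite /u E; exact: wb.
- have bu : \sum_(i < n) u i = \sum_j w j by rewrite (bigE (@snd R R)).
  rewrite bu.
  case: hs => [->|[h1 h2]]; first by left.
  right; split => // i /nth_sps[j E]; rewrite /s E; exact: h2.
Qed.

End Comb2.
Local Open Scope sesquilinear_scope.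

Section Spec.
Variable R : rcfType.
Local Notation C := (R[i]).
Local Notation ge := (fun x y : R => y <= x).

Definition dv n (A : 'M[C]_n) (j : 'I_n) : R := complex.Re (spectral_diag A 0 j).
Definition Sk n (A : 'M[C]_n) (k : nat) : R := \sum_(i < k) nth 0 (eigvals A) i.
Definition nsq (z : C) : R := complex.Re z ^+ 2 + complex.Im z ^+ 2.

Lemma cReD (x y : C) : complex.Re (x + y) = complex.Re x + complex.Re y.
Proof. by case: x; case: y. Qed.
Lemma cImD (x y : C) : complex.Im (x + y) = complex.Im x + complex.Im y.
Proof. by case: x; case: y. Qed.
Lemma cRe0 : complex.Re (0 : C) = 0. Proof. by []. Qed.
Lemma cIm0 : complex.Im (0 : C) = 0. Proof. by []. Qed.
Lemma cRe_sum (I : Type) (r : seq I) (P : pred I) (F : I -> C) :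
  complex.Re (\sum_(i <- r | P i) F i) = \sum_(i <- r | P i) complex.Re (F i).
Proof. exact: (big_morph _ cReD cRe0). Qed.
Lemma cIm_sum (I : Type) (r : seq I) (P : pred I) (F : I -> C) :
  complex.Im (\sum_(i <- r | P i) F i) = \sum_(i <- r | P i) complex.Im (F i).
Proof. exact: (big_morph _ cImD cIm0). Qed.
Lemma cReM (x y : C) : complex.Re (x * y) =
  complex.Re x * complex.Re y - complex.Im x * complex.Im y.
Proof. by case: x => a b; case: y => c d. Qed.
Lemma cImM (x y : C) : complex.Im (x * y) =
  complex.Re x * complex.Im y + complex.Im x * complex.Re y.
Proof. by case: x => a b; case: y => c d. Qed.
Lemma cRe_real (x : R) : complex.Re (x%:C%C : C) = x. Proof. by []. Qed.
Lemma cIm_real (x : R) : complex.Im (x%:C%C : C) = 0. Proof. by []. Qed.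
Lemma cReJ (x : C) : complex.Re (x^*) = complex.Re x. Proof. by case: x. Qed.
Lemma cImJ (x : C) : complex.Im (x^*) = - complex.Im x. Proof. by case: x. Qed.

Lemma mulJ (z : C) : z * z^* = (nsq z)%:C%C.
Proof.
apply/eqP; rewrite eq_complex /= cReM cImM cReJ cImJ /nsq /=.
by apply/andP; split; apply/eqP; ring.
Qed.

Lemma nsq_ge0 z : 0 <= nsq z.
Proof. by rewrite /nsq addr_ge0 // sqr_ge0. Qed.

Lemma tmul m n p (A : 'M[C]_(m, n)) (B : 'M[C]_(n, p)) : (A *m B)^t* = B^t* *m A^t*.
Proof. by rewrite trmx_mul map_mxM. Qed.

Lemma hermE n (A : 'M[C]_n) : (A \is hermsymmx) = (A^t* == A).
Proof.
apply/idP/idP => [/is_hermitianmxP|/eqP h].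
  by rewrite expr0 scale1r => h; rewrite -h.
by apply/is_hermitianmxP; rewrite expr0 scale1r h.
Qed.

Lemma tentry n (A : 'M[C]_n) i j : (A^t*) i j = (A j i)^*.
Proof. by rewrite !mxE. Qed.

Lemma unit1 n (P : 'M[C]_n) : P \is unitarymx -> P *m P^t* = 1%:M.
Proof. by move/unitarymxP. Qed.
Lemma unit2 n (P : 'M[C]_n) : P \is unitarymx -> P^t* *m P = 1%:M.
Proof.
move=> uP; rewrite -(invmx_unitary uP) mulVmx //; exact: unitarymx_unit.
Qed.

Lemma spec n (A : 'M[C]_n) : A \is hermsymmx ->
  A = (spectralmx A)^t* *m diag_mx (spectral_diag A) *m spectralmx A.
Proof.
move=> hA; have /orthomx_spectralP E := hermitian_normalmx hA.
by rewrite {1}E invmx_unitary // spectral_unitarymx.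
Qed.

Lemma Dreal n (A : 'M[C]_n) j : A \is hermsymmx ->
  spectral_diag A 0 j = (dv A j)%:C%C.
Proof.
move=> hA; have /mxOverP := hermitian_spectral_diag_real hA.
by move/(_ 0 j)/RRe_real.
Qed.

Lemma tr_form n (U Z : 'M[C]_n) (D : 'rV[C]_n) :
  \tr (Z *m (U^t* *m diag_mx D *m U)) = \sum_j (U *m Z *m U^t*) j j * D 0 j.
Proof.
rewrite !mulmxA mxtrace_mulC !mulmxA /mxtrace; apply: eq_bigr => j _.
by rewrite mul_mx_diag mxE.
Qed.

Lemma tr_conj n (U Z : 'M[C]_n) : U^t* *m U = 1%:M -> \tr (U *m Z *m U^t*) = \tr Z.
Proof. by move=> h; rewrite mxtrace_mulC mulmxA h mul1mx. Qed.

Lemma op_conj n (U Z : 'M[C]_n) : U^t* *m U = 1%:M -> orth_proj Z ->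
  orth_proj (U *m Z *m U^t*).
Proof.
move=> h [hZ iZ]; split.
  rewrite hermE !tmul trmxCK; move: hZ; rewrite hermE => /eqP ->.
  by rewrite mulmxA.
by rewrite !mulmxA -(mulmxA (U *m Z) (U^t*) U) h mulmx1 -(mulmxA U Z Z) iZ.
Qed.

Lemma op_diag n (W : 'M[C]_n) j : orth_proj W ->
  W j j = (\sum_l nsq (W j l))%:C%C.
Proof.
move=> [hW iW]; rewrite -{1}iW mxE rmorph_sum /=; apply: eq_bigr => l _.
move: hW; rewrite hermE => /eqP hW.
by rewrite -{2}hW tentry mulJ.
Qed.

Lemma op_bounds n (W : 'M[C]_n) : orth_proj W ->
  (forall j, complex.Im (W j j) = 0 /\ 0 <= complex.Re (W j j) <= 1) /\
  (forall a b, nsq (W a b) <= 1).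
Proof.
move=> oW.
have key j : 0 <= \sum_l nsq (W j l) <= 1.
  have r0 : 0 <= \sum_l nsq (W j l) by apply: sumr_ge0 => l _; exact: nsq_ge0.
  have : nsq (W j j) <= \sum_l nsq (W j l).
    by rewrite (bigD1 j) //= lerDl sumr_ge0 // => l _; exact: nsq_ge0.
  rewrite {1}op_diag // /nsq cRe_real cIm_real => h.
  rewrite r0 /=; nra.
split.
  by move=> j; rewrite op_diag // cRe_real cIm_real; split.
move=> a b; case/andP: (key a) => _ h1; apply: le_trans h1.
by rewrite (bigD1 b) //= lerDl sumr_ge0 // => l _; exact: nsq_ge0.
Qed.

Lemma nsq_le1 z : nsq z <= 1 ->
  -1 <= complex.Re z <= 1 /\ -1 <= complex.Im z <= 1.
Proof.
rewrite /nsq => h.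
have h1 : complex.Re z ^+ 2 <= 1 by have := sqr_ge0 (complex.Im z); lra.
have h2 : complex.Im z ^+ 2 <= 1 by have := sqr_ge0 (complex.Re z); lra.
split; apply/andP; split; nra.
Qed.

End Spec.
Section KF.
Variable R : rcfType.
Local Notation C := (R[i]).
Local Notation ge := (fun x y : R => y <= x).

Lemma Re_tr_form n (A Z : 'M[C]_n) : A \is hermsymmx ->
  orth_proj (spectralmx A *m Z *m (spectralmx A)^t*) ->
  complex.Re (\tr (Z *m A)) =
  \sum_j complex.Re ((spectralmx A *m Z *m (spectralmx A)^t*) j j) * dv A j.
Proof.
move=> hA oW; rewrite {1}(spec hA) tr_form cRe_sum; apply: eq_bigr => j _.
have [bj _] := op_bounds oW; have [imj _] := bj j.
by rewrite (Dreal _ hA) cReM cRe_real cIm_real imj mul0r subr0.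
Qed.

Lemma kyfan_mx n (A Z : 'M[C]_n) k : A \is hermsymmx -> orth_proj Z -> (k <= n)%N ->
  (complex.Re (\tr Z) = k%:R \/
   (complex.Re (\tr Z) <= k%:R /\ forall j, 0 <= dv A j)) ->
  complex.Re (\tr (Z *m A)) <= Sk A k.
Proof.
move=> hA oZ kn hk.
have u2 := unit2 (spectral_unitarymx A).
set P := spectralmx A in u2 *.
have oW : orth_proj (P *m Z *m P^t*).
  exact: op_conj u2 oZ.
rewrite Re_tr_form //.
have [bj _] := op_bounds oW.
have trW : \sum_j complex.Re ((P *m Z *m P^t*) j j) = complex.Re (\tr Z).
  by rewrite -(@tr_conj _ _ P Z u2) /mxtrace cRe_sum.
apply: (@kyfan_vec R n (dv A) (fun j => complex.Re ((P *m Z *m P^t*) j j)) k kn).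
  by move=> j; case: (bj j).
by rewrite trW.
Qed.

Lemma sum_take (s : seq R) k : (k <= size s)%N ->
  \sum_(x <- take k s) x = \sum_(i < k) nth 0 s i.
Proof.
move=> ks; rewrite (big_nth 0) size_takel // big_mkord.
by apply: eq_bigr => i _; rewrite nth_take.
Qed.

Definition topL n (A : 'M[C]_n) := sort (relpre (dv A) ge) (enum 'I_n).

Lemma Sk_top n (A : 'M[C]_n) k : (k <= n)%N ->
  Sk A k = \sum_(j <- take k (topL A)) dv A j.
Proof.
move=> kn; rewrite /Sk /eigvals.
have -> : [seq complex.Re (spectral_diag A 0 j) | j <- enum 'I_n] = [seq dv A j | j <- enum 'I_n] by [].
rewrite sort_map -sum_take; last by rewrite size_map size_sort size_enum_ord.
by rewrite -map_take big_map.
Qed.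

Lemma uniq_top n (A : 'M[C]_n) k : uniq (take k (topL A)).
Proof. by rewrite take_uniq // sort_uniq enum_uniq. Qed.

Lemma sum_mem (V : nmodType) n (J : seq 'I_n) (f : 'I_n -> V) : uniq J ->
  \sum_j (if j \in J then f j else 0) = \sum_(j <- J) f j.
Proof. by move=> uJ; rewrite -big_mkcond /= big_uniq. Qed.

Lemma kyfan_attain n (A : 'M[C]_n) k : A \is hermsymmx -> (k <= n)%N ->
  exists Z, [/\ orth_proj Z, complex.Re (\tr Z) = k%:R &
                complex.Re (\tr (Z *m A)) = Sk A k].
Proof.
move=> hA kn.
have u1 := unit1 (spectral_unitarymx A).
have u2 := unit2 (spectral_unitarymx A).
set P := spectralmx A in u1 u2 *.
set J := take k (topL A).
pose e : 'rV[C]_n := \row_j (if j \in J then 1 else 0).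
pose E := diag_mx e.
have oE : orth_proj E.
  split.
    rewrite hermE /E tr_diag_mx map_diag_mx; apply/eqP; congr diag_mx.
    by apply/rowP => j; rewrite !mxE; case: ifP; rewrite ?rmorph1 ?rmorph0.
  rewrite /E mulmx_diag; congr diag_mx.
  by apply/rowP => j; rewrite !mxE; case: ifP; rewrite ?mulr1 ?mulr0.
exists (P^t* *m E *m P); split.
- by rewrite -{2}(trmxCK P); apply: op_conj; rewrite ?trmxCK.
- rewrite -{2}(trmxCK P) tr_conj ?trmxCK // /E mxtrace_diag cRe_sum.
  rewrite (eq_bigr (fun j => if j \in J then 1 else 0)); last first.
    by move=> j _; rewrite mxE; case: ifP.
  rewrite -big_mkcond /= -big_uniq ?uniq_top //.
  rewrite (eq_bigr (fun _ => (1%N)%:R)) // -natr_sum sum1_size.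
  by rewrite /J size_takel // size_sort size_enum_ord.
- rewrite {1}(spec hA) tr_form cRe_sum Sk_top //.
  rewrite -/J -(@sum_mem _ _ J (dv A)) ?uniq_top //.
  apply: eq_bigr => j _.
  have -> : P *m (P^t* *m E *m P) *m P^t* = E.
    by rewrite !mulmxA u1 mul1mx -mulmxA u1 mulmx1.
  rewrite /E mxE eqxx mulr1n /e mxE (Dreal _ hA).
  by case: ifP; rewrite ?mul1r ?mul0r.
Qed.

Lemma Sk_n n (A : 'M[C]_n) : A \is hermsymmx -> Sk A n = complex.Re (\tr A).
Proof.
move=> hA; rewrite Sk_top // take_oversize ?size_sort ?size_enum_ord //.
have pe : perm_eq (topL A) (enum 'I_n) by rewrite perm_sort.
rewrite (perm_big _ pe) /= big_enum /=.
rewrite -[A in RHS]mul1mx {2}(spec hA) tr_form cRe_sum; apply: eq_bigr => j _.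
rewrite mulmx1 unit1 ?spectral_unitarymx // mxE eqxx mulr1n mul1r.
by rewrite (Dreal _ hA).
Qed.

End KF.
Section MPI.
Variable R : rcfType.
Local Notation C := (R[i]).

Lemma quad_entry n (U A : 'M[C]_n) j :
  (U *m A *m U^t*) j j = (row j U *m A *m (row j U)^t*) 0 0.
Proof.
rewrite -row_mul !mxE; apply: eq_bigr => l _; rewrite !mxE.
by congr (_ * _); rewrite !mxE.
Qed.

Lemma psd_dv n (A : 'M[C]_n) : psdmx A -> forall j, 0 <= dv A j.
Proof.
case=> hA pA j.
have u1 := unit1 (spectral_unitarymx A).
set P := spectralmx A in u1.
have E : P *m A *m P^t* = diag_mx (spectral_diag A).
  by rewrite {1}(spec hA) -/P !mulmxA u1 mul1mx -mulmxA u1 mulmx1.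
have := pA (row j P); rewrite map_trmx -quad_entry E mxE eqxx mulr1n (Dreal _ hA).
by rewrite ler0c.
Qed.

Lemma psd_conj n (M Q : 'M[C]_n) : psdmx M -> orth_proj Q -> psdmx (Q *m M *m Q).
Proof.
case=> hM pM [hQ iQ].
move: (hM) (hQ); rewrite !hermE => /eqP eM /eqP eQ.
split.
  by rewrite hermE !tmul eM eQ mulmxA.
move=> v; have := pM (v *m Q); rewrite !map_trmx tmul eQ.
by rewrite !mulmxA.
Qed.

Lemma vv_ge0 m (v : 'rV[C]_m) : 0 <= complex.Re ((v *m v^t*) 0 0).
Proof.
rewrite mxE cRe_sum; apply: sumr_ge0 => a _.
by rewrite !mxE mulJ cRe_real nsq_ge0.
Qed.

Lemma main_pw n (M Q : 'M[C]_n) k : psdmx M -> orth_proj Q -> (k <= n)%N ->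
  \sum_(j <- take k (topL M)) dv M j *
     complex.Re ((row j (spectralmx M) *m Q *m (row j (spectralmx M))^t*) 0 0)
  <= Sk (Q *m M *m Q) k.
Proof.
case: k => [|k] pM oQ kn.
  by rewrite take0 big_nil /Sk big_ord0.
have n0 : (0 < n)%N by apply: leq_trans kn.
pose j0 := Ordinal n0.
have u1 := unit1 (spectral_unitarymx M).
have u2 := unit2 (spectral_unitarymx M).
set P := spectralmx M in u1 u2 *.
set J := take k.+1 (topL M).
have sJ : size J = k.+1 by rewrite size_takel // size_sort size_enum_ord.
pose A' : 'M[C]_(k.+1, n) := \matrix_(i, l) (row (nth j0 J i) P *m Q) 0 l.
pose B := schmidt (row_base A').
pose Z := B^t* *m B.
have uB : B *m B^t* = 1%:M.
  by apply/unitarymxP; apply: schmidt_unitarymx; exact: rank_leq_col.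
have sub : (A' <= B)%MS by rewrite -{1}(eq_row_base A') schmidt_sub.
have AZ : A' *m Z = A'.
  case/submxP: sub => D ->.
  by rewrite /Z !mulmxA -(mulmxA D B (B^t*)) uB mulmx1.
have oZ : orth_proj Z.
  split; first by rewrite hermE /Z tmul trmxCK.
  by rewrite /Z !mulmxA -(mulmxA (B^t*) B (B^t*)) uB mulmx1.
have trZ : complex.Re (\tr Z) <= k.+1%:R.
  rewrite /Z mxtrace_mulC uB mxtrace1 -(rmorph_nat (real_complex R)) cRe_real.
  by rewrite ler_nat rank_leq_row.
have [hQ iQ] := oQ.
move: (hQ); rewrite hermE => /eqP eQ.
have pX := psd_conj pM oQ.
apply: le_trans (kyfan_mx pX.1 oZ kn (or_intror (conj trZ (psd_dv pX)))).
have EX : Q *m M *m Q = (P *m Q)^t* *m diag_mx (spectral_diag M) *m (P *m Q).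
  by rewrite {1}(spec pM.1) -/P tmul eQ !mulmxA.
rewrite EX tr_form cRe_sum.
pose f l := dv M l * complex.Re ((row l P *m Q *m Z *m (row l P *m Q)^t*) 0 0).
have fge0 l : 0 <= f l.
  apply: mulr_ge0; first exact: psd_dv.
  have -> : row l P *m Q *m Z *m (row l P *m Q)^t* =
     (row l P *m Q *m B^t*) *m (row l P *m Q *m B^t*)^t*.
    by rewrite /Z [in RHS]tmul trmxCK !mulmxA.
  exact: vv_ge0.
rewrite [X in _ <= X](eq_bigr (fun l => f l)); last first.
  move=> l _.
  rewrite quad_entry row_mul (Dreal _ pM.1) cReM cRe_real cIm_real.
  by rewrite mulr0 subr0 mulrC.
apply: le_trans (_ : \sum_l (if l \in J then f l else 0) <= _); last first.
  by apply: ler_sum => l _; case: ifP.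
rewrite (sum_mem _ (uniq_top M k.+1)) -/J le_eqVlt; apply/orP; left; apply/eqP.
rewrite big_seq_cond [RHS]big_seq_cond; apply: eq_bigr => l /andP[lJ _].
rewrite /f; congr (_ * complex.Re _).
have li : (index l J < k.+1)%N by rewrite -sJ index_mem.
have rA : row (Ordinal li) A' = row l P *m Q.
  by apply/rowP => a; rewrite !mxE nth_index.
have yZ : row l P *m Q *m Z = row l P *m Q by rewrite -rA -row_mul AZ.
rewrite yZ.
rewrite tmul eQ !mulmxA -(mulmxA (row l P) Q Q) iQ.
done.
Qed.

End MPI.
Section Lip.
Variable R : rcfType.
Local Notation C := (R[i]).

Lemma cReN (x : C) : complex.Re (- x) = - complex.Re x. Proof. by case: x. Qed.
Lemma cImN (x : C) : complex.Im (- x) = - complex.Im x. Proof. by case: x. Qed.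

Lemma bnd_mul (z e : C) eps : nsq z <= 1 ->
  `|complex.Re e| <= eps -> `|complex.Im e| <= eps ->
  complex.Re (z * e) <= eps *+ 2.
Proof.
move=> hz he1 he2; have [/andP[a1 a2] /andP[b1 b2]] := nsq_le1 hz.
rewrite cReM.
have h1 : `|complex.Re z| <= 1 by rewrite ler_norml a1 a2.
have h2 : `|complex.Im z| <= 1 by rewrite ler_norml b1 b2.
have k1 : `|complex.Re z * complex.Re e| <= eps.
  by rewrite normrM -[eps]mul1r ler_pM.
have k2 : `|complex.Im z * complex.Im e| <= eps.
  by rewrite normrM -[eps]mul1r ler_pM.
move: k1 k2; rewrite !ler_norml => /andP[c1 c2] /andP[d1 d2].
rewrite mulr2n; lra.
Qed.

Lemma lip n (X Y : 'M[C]_n) k eps : X \is hermsymmx -> Y \is hermsymmx -> (k <= n)%N ->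
  (forall a b, `|complex.Re (X a b - Y a b)| <= eps /\ `|complex.Im (X a b - Y a b)| <= eps) ->
  Sk X k <= Sk Y k + (eps *+ 2) *+ (n * n).
Proof.
move=> hX hY kn he.
have [Z [oZ trZ eZ]] := kyfan_attain hX kn.
rewrite -eZ.
have -> : Z *m X = Z *m Y + Z *m (X - Y) by rewrite mulmxBr addrC subrK.
rewrite mxtraceD cReD lerD //; first exact: kyfan_mx hY oZ kn (or_introl trZ).
have -> : (eps *+ 2) *+ (n * n) = \sum_(a < n) \sum_(b < n) eps *+ 2.
  by rewrite sumr_const sumr_const !card_ord -mulrnA.
rewrite /mxtrace cRe_sum; apply: ler_sum => a _.
rewrite mxE cRe_sum; apply: ler_sum => b _.
have [_ bz] := op_bounds oZ.
have [e1 e2] := he b a.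
apply: bnd_mul; first exact: bz.
  by rewrite !mxE.
by rewrite !mxE.
Qed.

End Lip.
Section MeasFloor.
Local Open Scope classical_set_scope.
Context d (T : measurableType d) (R : realType).

Lemma mem_bigI (K : eqType) (s : seq K) (F : K -> set T) w :
  (\big[setI/setT]_(i <- s) F i) w <-> forall i, i \in s -> F i w.
Proof.
elim: s => [|a s IH]; first by rewrite big_nil; split.
rewrite big_cons; split.
  by case=> Fa /IH h i; rewrite in_cons => /orP[/eqP ->|/h].
move=> h; split; first by apply: h; rewrite in_cons eqxx.
by apply/IH => i si; apply: h; rewrite in_cons si orbT.
Qed.

Lemma meas_floor (K : finType) (f : K -> T -> R) (G : {ffun K -> int} -> R) :
  (forall k, measurable_fun setT (f k)) ->
  measurable_fun setT (fun w => G [ffun k => Num.floor (f k w)]).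
Proof.
move=> mf _ Y mY; rewrite setTI.
pose S (c : {ffun K -> int}) :=
  \big[setI/setT]_(k <- enum K) (f k @^-1` `[(c k)%:~R, (c k + 1)%:~R[).
have mS c : measurable (S c).
  apply: bigsetI_measurable => k _.
  by rewrite -[X in measurable X]setTI; apply: mf => //; exact: measurable_itv.
have Sc c w : S c w <-> [ffun k => Num.floor (f k w)] = c.
  rewrite /S mem_bigI; split.
    move=> h; apply/ffunP => k; rewrite ffunE; apply: floor_def.
    have := h k; rewrite /= in_itv /=; apply; exact: mem_enum.
  move=> <- k _; rewrite /= in_itv /= ffunE; exact: floor_itv.
have -> : (fun w => G [ffun k => Num.floor (f k w)]) @^-1` Y =
   \bigcup_c (if pselect (Y (G c)) then S c else set0).
  apply/seteqP; split => w /=.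
    move=> Yw; exists [ffun k => Num.floor (f k w)]; first by [].
    by case: pselect => // ?; apply/Sc.
  case=> c _; case: pselect => // Yc /Sc E; by rewrite E.
apply: countable_bigcupT_measurable; first exact: countableP.
by move=> c; case: pselect => ?; [exact: mS | exact: measurable0].
Qed.

End MeasFloor.
Section CM.
Local Open Scope classical_set_scope.
Context d (T : measurableType d) (R : realType).
Local Notation C := (R[i]).

Definition cm (f : T -> C) := measurable_fun setT (fun w => complex.Re (f w)) /\
  measurable_fun setT (fun w => complex.Im (f w)).

Lemma meas_sum (I : Type) (s : seq I) (F : I -> T -> R) :
  (forall i, measurable_fun setT (F i)) ->
  measurable_fun setT (fun w => \sum_(i <- s) F i w).
Proof.
move=> mF; elim: s => [|a s IH].
  have -> : (fun w => \sum_(i <- [::]) F i w) = cst 0.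
    by apply/funext => w; rewrite big_nil.
  exact: measurable_cst.
have -> : (fun w => \sum_(i <- a :: s) F i w) = F a \+ (fun w => \sum_(i <- s) F i w).
  by apply/funext => w; rewrite big_cons.
exact: measurable_funD.
Qed.

Lemma cm_cst (c : C) : cm (fun _ => c).
Proof. by split; exact: measurable_cst. Qed.

Lemma cm_add f g : cm f -> cm g -> cm (fun w => f w + g w).
Proof.
move=> [f1 f2] [g1 g2]; split.
  have -> : (fun w => complex.Re (f w + g w)) =
     (fun w => complex.Re (f w)) \+ (fun w => complex.Re (g w)).
    by apply/funext => w; rewrite cReD.
  exact: measurable_funD.
have -> : (fun w => complex.Im (f w + g w)) =
   (fun w => complex.Im (f w)) \+ (fun w => complex.Im (g w)).
  by apply/funext => w; rewrite cImD.
exact: measurable_funD.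
Qed.

Lemma cm_mul f g : cm f -> cm g -> cm (fun w => f w * g w).
Proof.
move=> [f1 f2] [g1 g2]; split.
  have -> : (fun w => complex.Re (f w * g w)) =
     ((fun w => complex.Re (f w)) \* (fun w => complex.Re (g w))) \-
     ((fun w => complex.Im (f w)) \* (fun w => complex.Im (g w))).
    by apply/funext => w; exact: cReM.
  by apply: measurable_funB; exact: measurable_funM.
have -> : (fun w => complex.Im (f w * g w)) =
   ((fun w => complex.Re (f w)) \* (fun w => complex.Im (g w))) \+
   ((fun w => complex.Im (f w)) \* (fun w => complex.Re (g w))).
  by apply/funext => w; exact: cImM.
by apply: measurable_funD; exact: measurable_funM.
Qed.

Lemma cm_sum (I : Type) (s : seq I) (F : I -> T -> C) :
  (forall i, cm (F i)) -> cm (fun w => \sum_(i <- s) F i w).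
Proof.
move=> mF; elim: s => [|a s IH].
  have -> : (fun w => \sum_(i <- [::]) F i w) = (fun _ => 0).
    by apply/funext => w; rewrite big_nil.
  exact: cm_cst.
have -> : (fun w => \sum_(i <- a :: s) F i w) = (fun w => F a w + \sum_(i <- s) F i w).
  by apply/funext => w; rewrite big_cons.
exact: cm_add.
Qed.

Lemma cm_mx n (Q : T -> 'M[C]_n) (M : 'M[C]_n) :
  (forall i j, cm (fun w => Q w i j)) ->
  forall a b, cm (fun w => (Q w *m M *m Q w) a b).
Proof.
move=> mQ a b.
have -> : (fun w => (Q w *m M *m Q w) a b) =
   (fun w => \sum_(c <- index_enum 'I_n) (\sum_(e <- index_enum 'I_n) Q w a e * M e c) * Q w c b).
  by apply/funext => w; rewrite mxE; apply: eq_bigr => c _; rewrite mxE.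
apply: cm_sum => c; apply: cm_mul => //; apply: cm_sum => e.
by apply: cm_mul => //; exact: cm_cst.
Qed.

Variable P : probability T R.

Lemma int_bnd (f : T -> R) K : measurable_fun setT f -> (forall w, `|f w| <= K) ->
  P.-integrable setT (EFin \o f).
Proof.
move=> mf hK; apply: measurable_bounded_integrable => //.
  have P1 : P setT = 1%E := probability_setT P.
  have h := @ltry R 1; rewrite -P1 in h; exact: h.
exists K; split; first by rewrite num_real.
by move=> M KM x _; exact: le_trans (hK x) (ltW KM).
Qed.

Lemma Rint_sum (I : Type) (s : seq I) (F : I -> T -> R) (K : I -> R) :
  (forall i, measurable_fun setT (F i)) -> (forall i w, `|F i w| <= K i) ->
  \int[P]_w (\sum_(i <- s) F i w) = \sum_(i <- s) \int[P]_w F i w.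
Proof.
move=> mF hK; elim: s => [|a s IH].
  under eq_Rintegral do rewrite big_nil.
  by rewrite big_nil Rintegral_cst // mul0r.
under eq_Rintegral do rewrite big_cons.
rewrite big_cons RintegralD //; first by rewrite IH.
  exact: int_bnd (mF a) (hK a).
apply: (@int_bnd _ (\sum_(i <- s) K i)); first exact: meas_sum.
by move=> w; apply: le_trans (ler_norm_sum _ _ _) _; apply: ler_sum => i _.
Qed.

End CM.
Section Expect.
Local Open Scope classical_set_scope.
Context d (T : measurableType d) (R : realType) (P : probability T R).
Local Notation C := (R[i]).

Lemma normQ n (Q : 'M[C]_n) a b : orth_proj Q ->
  `|complex.Re (Q a b)| <= 1 /\ `|complex.Im (Q a b)| <= 1.
Proof.
move=> oQ; have [_ h] := op_bounds oQ.
have [/andP[a1 a2] /andP[b1 b2]] := nsq_le1 (h a b).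
by rewrite !ler_norml a1 a2 b1 b2.
Qed.

Lemma E_tr n (alpha : R) (Q : T -> 'M[C]_n) (Cm : 'M[C]_n) :
  stoch_block_decomp P alpha Q ->
  \int[P]_w complex.Re (\tr (Cm *m Q w)) = alpha^-1 * complex.Re (\tr Cm).
Proof.
case=> mQ oQ EQ.
have iQ a b : \int[P]_w complex.Re (Q w a b) = alpha^-1 *+ (a == b) /\
              \int[P]_w complex.Im (Q w a b) = 0.
  have := congr1 (fun A : 'M[C]_n => A a b) EQ; rewrite !mxE /cexpect.
  by case: (a == b) => /= -[-> ->].
have intQ a b (c1 c2 : R) :
    \int[P]_w (c1 * complex.Re (Q w b a) - c2 * complex.Im (Q w b a)) =
    c1 * (alpha^-1 *+ (b == a)).
  have [mr mi] := mQ b a.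
  have [e1 e2] := iQ b a.
  rewrite RintegralB //.
  - rewrite RintegralZl //; last exact: (int_bnd P mr) (fun w => (normQ b a (oQ w)).1).
    rewrite RintegralZl //; last exact: (int_bnd P mi) (fun w => (normQ b a (oQ w)).2).
    by rewrite e1 e2 mulr0 subr0.
  - apply: (@int_bnd _ _ _ P _ `|c1|); first by apply: measurable_funM => //; exact: measurable_cst.
    move=> w; rewrite normrM -[X in _ <= X]mulr1 ler_wpM2l //.
    exact: (normQ b a (oQ w)).1.
  - apply: (@int_bnd _ _ _ P _ `|c2|); first by apply: measurable_funM => //; exact: measurable_cst.
    move=> w; rewrite normrM -[X in _ <= X]mulr1 ler_wpM2l //.
    exact: (normQ b a (oQ w)).2.
pose F (p : 'I_n * 'I_n) w := complex.Re (Cm p.1 p.2) * complex.Re (Q w p.2 p.1) -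
                           complex.Im (Cm p.1 p.2) * complex.Im (Q w p.2 p.1).
pose K (p : 'I_n * 'I_n) := `|complex.Re (Cm p.1 p.2)| + `|complex.Im (Cm p.1 p.2)|.
have E w : complex.Re (\tr (Cm *m Q w)) = \sum_(p <- index_enum _) F p w.
  rewrite -(pair_big xpredT xpredT (fun a b => F (a, b) w)) /=.
  rewrite /mxtrace cRe_sum; apply: eq_bigr => a _.
  by rewrite mxE cRe_sum; apply: eq_bigr => b _; rewrite cReM.
have -> : \int[P]_w complex.Re (\tr (Cm *m Q w)) =
          \int[P]_w \sum_(p <- index_enum _) F p w.
  by apply: eq_Rintegral => w _; exact: E.
rewrite (@Rint_sum _ _ _ P _ (index_enum _) F K).
- transitivity (\sum_(p <- index_enum _) complex.Re (Cm p.1 p.2) * (alpha^-1 *+ (p.2 == p.1))).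
    apply: eq_bigr => p _; rewrite /F.
    exact: (intQ p.1 p.2 (complex.Re (Cm p.1 p.2)) (complex.Im (Cm p.1 p.2))).
  transitivity (\sum_a \sum_b complex.Re (Cm a b) * (alpha^-1 *+ (b == a))).
    by rewrite pair_big.
  rewrite /mxtrace cRe_sum mulr_sumr; apply: eq_bigr => a _.
  rewrite (bigD1 a) //= eqxx mulr1n big1 ?addr0; first by rewrite mulrC.
  by move=> b /negbTE ->; rewrite mulr0n mulr0.
- move=> p; have [mr mi] := mQ p.2 p.1.
  by apply: measurable_funB; apply: measurable_funM => //; exact: measurable_cst.
- move=> p w; apply: le_trans (ler_normB _ _) _.
  have [h1 h2] := normQ p.2 p.1 (oQ w).
  apply: lerD; rewrite normrM -[X in _ <= X]mulr1 ler_wpM2l //.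
Qed.

End Expect.
Section Disc.
Local Open Scope classical_set_scope.
Context d (T : measurableType d) (R : realType).
Local Notation C := (R[i]).

Definition xcomp n (X : 'M[C]_n) (k : 'I_n * 'I_n * bool) : R :=
  if k.2 then complex.Im (X k.1.1 k.1.2) else complex.Re (X k.1.1 k.1.2).

Definition vv n m (c : {ffun 'I_n * 'I_n * bool -> int}) k : R := (c k)%:~R / m.+1%:R.

Definition Dm n m (c : {ffun 'I_n * 'I_n * bool -> int}) : 'M[C]_n :=
  \matrix_(a, b) Complex ((vv m c (a, b, false) + vv m c (b, a, false)) / 2)
                         ((vv m c (a, b, true) - vv m c (b, a, true)) / 2).

Definition zf n m (X : 'M[C]_n) : {ffun 'I_n * 'I_n * bool -> int} :=
  [ffun k => Num.floor (m.+1%:R * xcomp X k)].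

Lemma Dm_herm n m c : @Dm n m c \is hermsymmx.
Proof.
rewrite hermE; apply/eqP/matrixP => a b; rewrite tentry !mxE.
apply/eqP; rewrite eq_complex cReJ cImJ /=; apply/andP; split; apply/eqP.
  by rewrite addrC.
by rewrite -mulNr opprB.
Qed.

Lemma rnd_err m (x : R) : `|(Num.floor (m.+1%:R * x))%:~R / m.+1%:R - x| <= m.+1%:R^-1.
Proof.
have c0 : 0 < m.+1%:R :> R by rewrite ltr0n.
have := floor_itv (m.+1%:R * x); rewrite intrD /= => /andP[h1 h2].
set y := (Num.floor _)%:~R in h1 h2 *.
set c := m.+1%:R in c0 h1 h2 *.
have -> : y / c - x = (y - c * x) / c by rewrite mulrBl mulrAC divff ?mul1r // gt_eqF.
have h2' : c * x < y + 1 by move: h2; rewrite mulr1z.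
have ci : 0 < c^-1 by rewrite invr_gt0.
rewrite normrM (gtr0_norm ci).
apply: (@le_trans _ _ (1 * c^-1)); last by rewrite mul1r.
apply: ler_wpM2r; first exact: ltW ci.
rewrite ler_norml; apply/andP; split; lra.
Qed.

Lemma Dm_err n m (X : 'M[C]_n) : X \is hermsymmx -> forall a b,
  `|complex.Re (Dm m (zf m X) a b - X a b)| <= m.+1%:R^-1 /\
  `|complex.Im (Dm m (zf m X) a b - X a b)| <= m.+1%:R^-1.
Proof.
move=> hX a b; move: (hX); rewrite hermE => /eqP eX.
have Xba : X b a = (X a b)^* by rewrite -{1}eX tentry.
rewrite !mxE /= /vv !ffunE /xcomp /= Xba cReJ cImJ.
have e1 := rnd_err m (complex.Re (X a b)).
have e2 := rnd_err m (complex.Im (X a b)).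
have e3 := rnd_err m (- complex.Im (X a b)).
set r := (_ / m.+1%:R) in e1 *.
set p := (_ / m.+1%:R) in e2 *.
set q := (_ / m.+1%:R) in e3 *.
set del := m.+1%:R^-1 in e1 e2 e3 *.
rewrite cReD cImD cReN cImN /=.
move: e1 e2 e3; rewrite !ler_norml => /andP[e1 e1'] /andP[e2 e2'] /andP[e3 e3'].
split; apply/andP; split; lra.
Qed.

Lemma meas_Sk n (X : T -> 'M[C]_n) k : (forall w, X w \is hermsymmx) ->
  (forall a b, cm (fun w => X w a b)) -> (k <= n)%N ->
  measurable_fun setT (fun w => Sk (X w) k).
Proof.
move=> hX mX kn.
apply: (@measurable_fun_cvg _ _ _ _ (fun m w => Sk (Dm m (zf m (X w))) k)).
  move=> m.
  apply: (@meas_floor _ _ _ _ (fun kk w => m.+1%:R * xcomp (X w) kk) (fun c => Sk (Dm m c) k)).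
  move=> [[a b] []] /=; apply: measurable_funM; (try exact: measurable_cst);
    by case: (mX a b).
move=> w _.
pose K : R := (2 * (n * n))%:R.
have bnd m : Sk (X w) k - harmonic m * K <= Sk (Dm m (zf m (X w))) k <=
             Sk (X w) k + harmonic m * K.
  have eK : harmonic m * K = (m.+1%:R^-1 *+ 2) *+ (n * n).
    by rewrite /harmonic /= /K mulr_natr -mulrnA.
  rewrite eK; apply/andP; split.
    rewrite lerBlDr; apply: lip => //; first exact: Dm_herm.
    move=> a b; have [h1 h2] := Dm_err m (hX w) a b.
    by rewrite -opprB cReN cImN !normrN.
  apply: lip => //; first exact: Dm_herm.
  exact: Dm_err.
apply: (@squeeze_cvgr _ _ _ _ (fun m => Sk (X w) k - harmonic m * K)
                               (fun m => Sk (X w) k + harmonic m * K)).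
  by apply: nearW => m; exact: bnd.
  rewrite -[X in _ --> X]subr0 -(mul0r K); apply: cvgB; first exact: cvg_cst.
  by apply: cvgMr_tmp; exact: cvg_harmonic.
rewrite -[X in _ --> X]addr0 -(mul0r K); apply: cvgD; first exact: cvg_cst.
by apply: cvgMr_tmp; exact: cvg_harmonic.
Qed.

End Disc.
Section Main.
Local Open Scope classical_set_scope.
Context d (T : measurableType d) (R : realType) (P : probability T R).
Local Notation C := (R[i]).
Local Notation ge := (fun x y : R => y <= x).
Local Open Scope sesquilinear_scope.

Definition KC n (Cm : 'M[C]_n) : R :=
  \sum_(p : 'I_n * 'I_n) (`|complex.Re (Cm p.1 p.2)| + `|complex.Im (Cm p.1 p.2)|).

Lemma KC_ge0 n (Cm : 'M[C]_n) : 0 <= KC Cm.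
Proof. by apply: sumr_ge0 => p _; apply: addr_ge0. Qed.

Lemma trCQ n alpha (Q : T -> 'M[C]_n) (Cm : 'M[C]_n) :
  stoch_block_decomp P alpha Q ->
  measurable_fun setT (fun w => complex.Re (\tr (Cm *m Q w))) /\
  forall w, `|complex.Re (\tr (Cm *m Q w))| <= KC Cm.
Proof.
case=> mQ oQ _.
pose F (p : 'I_n * 'I_n) w := complex.Re (Cm p.1 p.2) * complex.Re (Q w p.2 p.1) -
                           complex.Im (Cm p.1 p.2) * complex.Im (Q w p.2 p.1).
have E w : complex.Re (\tr (Cm *m Q w)) = \sum_(p <- index_enum _) F p w.
  rewrite -(pair_big xpredT xpredT (fun a b => F (a, b) w)) /=.
  rewrite /mxtrace cRe_sum; apply: eq_bigr => a _.
  by rewrite mxE cRe_sum; apply: eq_bigr => b _; rewrite cReM.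
split.
  have -> : (fun w => complex.Re (\tr (Cm *m Q w))) =
            (fun w => \sum_(p <- index_enum _) F p w).
    by apply/funext => w; exact: E.
  apply: meas_sum => p; have [mr mi] := mQ p.2 p.1.
  by apply: measurable_funB; apply: measurable_funM => //; exact: measurable_cst.
move=> w; rewrite E /KC; apply: le_trans (ler_norm_sum _ _ _) _; apply: ler_sum => p _.
apply: le_trans (ler_normB _ _) _.
have [h1 h2] := normQ p.2 p.1 (oQ w).
by apply: lerD; rewrite normrM -[X in _ <= X]mulr1 ler_wpM2l.
Qed.

Lemma eig_facts n (Y : 'M[C]_n) : psdmx Y ->
  [/\ size (eigvals Y) = n, forall i, 0 <= nth 0 (eigvals Y) i &
      forall i j, (i <= j)%N -> (j < n)%N -> nth 0 (eigvals Y) j <= nth 0 (eigvals Y) i].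
Proof.
move=> pY.
have sz : size (eigvals Y) = n by rewrite size_sort size_map size_enum_ord.
split => //.
  move=> i; case: (ltnP i n) => hi; last by rewrite nth_default ?sz.
  have : nth 0 (eigvals Y) i \in eigvals Y by rewrite mem_nth ?sz.
  rewrite mem_sort => /mapP[j _ ->]; exact: psd_dv pY j.
move=> i j ij jn.
have srt : sorted ge (eigvals Y) by apply: sort_sorted => x y; exact: le_total.
have tr : transitive ge by move=> x1 x2 x3 h1 h2; exact: le_trans h2 h1.
have := sorted_leq_nth tr (@lexx _ _) 0 srt; apply => //; rewrite inE sz //.
exact: leq_ltn_trans ij jn.
Qed.

Lemma Sk_ge0 n (Y : 'M[C]_n) k : psdmx Y -> 0 <= Sk Y k.
Proof. by move=> pY; apply: sumr_ge0 => i _; have [_ h _] := eig_facts pY. Qed.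

Lemma Sk_le n (Y : 'M[C]_n) k : psdmx Y -> (k <= n)%N -> Sk Y k <= Sk Y n.
Proof.
move=> pY kn; have [_ h _] := eig_facts pY.
rewrite /Sk (big_ord_widen n (fun i => nth 0 (eigvals Y) i) kn) big_mkcond /=.
by apply: ler_sum => i _; case: ifP.
Qed.

Lemma nth_le_Sk n (Y : 'M[C]_n) i : psdmx Y -> (i < n)%N -> nth 0 (eigvals Y) i <= Sk Y n.
Proof.
move=> pY hi; have [_ h _] := eig_facts pY.
rewrite /Sk (bigD1 (Ordinal hi)) //= lerDl; apply: sumr_ge0 => j _; exact: h.
Qed.

Lemma eig_diff n (Y : 'M[C]_n) j : nth 0 (eigvals Y) j = Sk Y j.+1 - Sk Y j.
Proof. by rewrite /Sk big_ord_recr /= addrC addrK. Qed.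

Lemma main_thm n (alpha : R) (Q : T -> 'M[C]_n) (M : 'M[C]_n) :
  0 < alpha -> psdmx M -> stoch_block_decomp P alpha Q ->
  majorized (fun j => eigval M j)
            (fun j => alpha * \int[P]_w eigval (Q w *m M *m Q w) j).
Proof.
move=> a0 pM sQ.
have [mQ oQ EQ] := sQ.
pose X w := Q w *m M *m Q w.
have pX w : psdmx (X w) := psd_conj pM (oQ w).
have hX w : X w \is hermsymmx := (pX w).1.
have mX a b : cm (fun w => X w a b) := cm_mx M mQ a b.
have trX w : complex.Re (\tr (X w)) = complex.Re (\tr (M *m Q w)).
  by rewrite /X mxtrace_mulC mulmxA (oQ w).2 mxtrace_mulC.
have [mTr bTr] := trCQ M sQ.
pose KM := KC M.
have SkB w k : (k <= n)%N -> 0 <= Sk (X w) k <= KM.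
  move=> kn; rewrite Sk_ge0 //=; apply: le_trans (Sk_le (pX w) kn) _.
  rewrite Sk_n // trX; exact: le_trans (ler_norm _) (bTr w).
have mS k : (k <= n)%N -> measurable_fun setT (fun w => Sk (X w) k).
  by move=> kn; exact: meas_Sk hX mX kn.
pose L i w := nth 0 (eigvals (X w)) i.
have mL i : (i < n)%N -> measurable_fun setT (L i).
  move=> hi.
  have -> : L i = (fun w => Sk (X w) i.+1) \- (fun w => Sk (X w) i).
    by apply/funext => w; rewrite /L eig_diff.
  by apply: measurable_funB; apply: mS => //; exact: ltnW.
have KM0 : 0 <= KM by exact: KC_ge0.
have bL i w : `|L i w| <= KM.
  have [_ h0 _] := eig_facts (pX w).
  rewrite ger0_norm ?h0 //; case: (ltnP i n) => hi.
    apply: le_trans (nth_le_Sk (pX w) hi) _.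
    by case/andP: (SkB w n (leqnn n)).
  have [sz _ _] := eig_facts (pX w); by rewrite /L nth_default // sz.
have iL i : (i < n)%N -> P.-integrable setT (EFin \o L i).
  by move=> hi; exact: (int_bnd P (mL i hi) (bL i)).
have iS k : (k <= n)%N -> P.-integrable setT (EFin \o (fun w => Sk (X w) k)).
  move=> kn; apply: (@int_bnd _ _ _ P _ KM (mS k kn)) => w.
  have /andP[h1 h2] := SkB w k kn; by rewrite ger0_norm.
have sumL k : (k <= n)%N ->
    \sum_(i < k) alpha * \int[P]_w L i w = alpha * \int[P]_w Sk (X w) k.
  move=> kn; rewrite -mulr_sumr; congr (_ * _).
  rewrite /Sk (@Rint_sum _ _ _ P _ (index_enum 'I_k) (fun (i : 'I_k) w => L i w) (fun _ => KM)) //.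
  by move=> i; apply: mL; exact: leq_trans (ltn_ord i) kn.
pose beta i := alpha * \int[P]_w L i w.
have betaE : [seq alpha * \int[P]_w eigval (Q w *m M *m Q w) j | j <- enum 'I_n] =
             [seq beta i | i <- iota 0 n].
  by rewrite -val_enum_ord -map_comp.
have ysE : sort ge [seq alpha * \int[P]_w eigval (Q w *m M *m Q w) j | j <- enum 'I_n] =
           [seq beta i | i <- iota 0 n].
  rewrite betaE; apply: sorted_sort.
    by move=> x1 x2 x3 h1 h2; exact: le_trans h2 h1.
  apply/(sortedP 0) => i; rewrite size_map size_iota => hi.
  rewrite !(nth_map 0) ?size_iota ?(ltnW hi) // !nth_iota ?(ltnW hi) // !add0n.
  rewrite /beta ler_pM2l //; apply: le_Rintegral => //.
  - exact: iL hi.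
  - exact: iL (ltnW hi).
  - move=> w _; have [_ _ h] := eig_facts (pX w); exact: h.
have xsE : sort ge [seq eigval M j | j <- enum 'I_n] = eigvals M.
  have [sz _ _] := eig_facts pM.
  have -> : [seq eigval M j | j <- enum 'I_n] = eigvals M.
    rewrite -[RHS](mkseq_nth 0) sz /mkseq -val_enum_ord -map_comp.
    by apply: eq_map => j.
  by apply: sorted_sort; [move=> x1 x2 x3 h1 h2; exact: le_trans h2 h1 |
                          apply: sort_sorted => x y; exact: le_total].
have nthB k : (k <= n)%N -> \sum_(i < k) nth 0 [seq beta i | i <- iota 0 n] i =
                            alpha * \int[P]_w Sk (X w) k.
  move=> kn; rewrite -sumL //; apply: eq_bigr => i _.
  have hi : (i < n)%N := leq_trans (ltn_ord i) kn.
  by rewrite (nth_map 0) ?size_iota // nth_iota.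
have MI k : (k <= n)%N -> Sk M k <= alpha * \int[P]_w Sk (X w) k.
  move=> kn.
  have u1 := unit1 (spectral_unitarymx M).
  set P' := spectralmx M in u1.
  set J := take k (topL M).
  pose Cj (j : 'I_n) := (row j P')^t* *m row j P'.
  pose F (j : 'I_n) w := dv M j * complex.Re (\tr (Cj j *m Q w)).
  pose g w := \sum_(j <- J) F j w.
  have trv j : complex.Re (\tr (Cj j)) = 1.
    rewrite /Cj mxtrace_mulC /mxtrace big_ord1.
    have -> : (row j P' *m (row j P')^t*) 0 0 = (P' *m P'^t*) j j.
      by rewrite !mxE; apply: eq_bigr => l _; rewrite !mxE.
    by rewrite u1 mxE eqxx.
  have gle w : g w <= Sk (X w) k.
    apply: (le_trans _ (main_pw pM (oQ w) kn)); rewrite le_eqVlt; apply/orP; left; apply/eqP.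
    apply: eq_bigr => j _; rewrite /F /Cj; congr (_ * complex.Re _).
    by rewrite -mulmxA mxtrace_mulC /mxtrace big_ord1.
  have mF j : measurable_fun setT (F j).
    by apply: measurable_funM; [exact: measurable_cst | exact: (trCQ (Cj j) sQ).1].
  have bF j w : `|F j w| <= `|dv M j| * KC (Cj j).
    by rewrite /F normrM ler_wpM2l // (trCQ (Cj j) sQ).2.
  have ig : \int[P]_w g w = alpha^-1 * Sk M k.
    rewrite /g (@Rint_sum _ _ _ P _ J F (fun j => `|dv M j| * KC (Cj j))) //.
    rewrite (Sk_top _ kn) -/J mulr_sumr; apply: eq_bigr => j _.
    rewrite /F RintegralZl //; last exact: (int_bnd P (trCQ (Cj j) sQ).1 (trCQ (Cj j) sQ).2).
    by rewrite (E_tr _ sQ) trv mulr1 mulrC.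
  have igI : P.-integrable setT (EFin \o g).
    apply: (@int_bnd _ _ _ P _ (\sum_(j <- J) `|dv M j| * KC (Cj j))).
      exact: meas_sum.
    by move=> w; apply: le_trans (ler_norm_sum _ _ _) _; apply: ler_sum => j _.
  have -> : Sk M k = alpha * \int[P]_w g w.
    by rewrite ig mulrA divff ?mul1r // gt_eqF.
  rewrite ler_pM2l //; apply: le_Rintegral => //; first exact: iS.
rewrite /majorized xsE ysE; split.
  move=> k /andP[_ kn1]; have kn : (k <= n)%N by apply: leq_trans kn1 (leq_pred n).
  by rewrite nthB //; exact: MI.
rewrite nthB // -/(Sk M n) Sk_n; last exact: pM.1.
have -> : \int[P]_w Sk (X w) n = \int[P]_w complex.Re (\tr (M *m Q w)).
  by apply: eq_Rintegral => w _; rewrite Sk_n // trX.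
by rewrite (E_tr _ sQ) mulrA divff ?mul1r // gt_eqF.
Qed.

End Main.

Theorem lemma2p10 (d : measure_display) (T : measurableType d) (R : realType)
    (P : probability T R) (n : nat) (alpha : R) (Q : T -> 'M[R[i]]_n)
    (M : 'M[R[i]]_n) :
  0 < alpha ->
  psdmx M ->
  stoch_block_decomp P alpha Q ->
  majorized (fun j => eigval M j)
            (fun j => alpha * \int[P]_w eigval (Q w *m M *m Q w) j).
Proof. exact: main_thm. Qed.
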